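(* Let $F:\mathbb{R}^d\to\mathbb{R}$ be twice differentiable with $L_2$-Lipschitz Hessian. Let $x_k\in\mathbb{R}^d$, $s_k\in\mathbb{R}^d$, $\epsilon_1>0$, $M>0$, $\alpha,\beta\ge0$, and let $g_k\in\mathbb{R}^d$, $H_k\in\mathbb{R}^{d\times d}$ symmetric satisfy $\|H_k-\nabla^2F(x_k)\|\le\alpha\max\{\|s_k\|,\epsilon_1\}$ and $\|g_k-\nabla F(x_k)\|\le\beta\max\{\|s_k\|^2,\epsilon_1^2\}$. Let $s_{k+1}$ be a global minimizer of $s\mapsto g_k^\top s+\frac12 s^\top H_k s+\frac M6\|s\|^3$ and $x_{k+1}=x_k+s_{k+1}$. Then $$F(x_{k+1})-F(x_k)\le -\Big(\frac{3M-2L_2}{12}-2\beta-\alpha\Big)\|s_{k+1}\|^3+\Big(\beta+\frac\alpha2\Big)\|s_k\|^3+\Big(\beta+\frac\alpha2\Big)\epsilon_1^3 .$$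
   Context: $\|\cdot\|$ denotes the Euclidean norm for vectors and the spectral norm for matrices. *)

(* Defs.v *)
From mathcomp Require Import all_boot.
From Stdlib Require Import Reals.
Set Implicit Arguments. Unset Strict Implicit.
Open Scope R_scope.

Definition vec (d : nat) := 'I_d -> R.
Definition mat (d : nat) := 'I_d -> 'I_d -> R.

Definition vadd d (u v : vec d) : vec d := fun i => u i + v i.
Definition vsub d (u v : vec d) : vec d := fun i => u i - v i.
Definition msub d (A B : mat d) : mat d := fun i j => A i j - B i j.

Definition dot d (u v : vec d) : R := \big[Rplus/0]_(i < d) (u i * v i).
Definition norm d (v : vec d) : R := sqrt (dot v v).
Definition matvec d (A : mat d) (v : vec d) : vec d :=
  fun i => \big[Rplus/0]_(j < d) (A i j * v j).

(* Spectral (operator) norm bound:  ||A|| <= c  iff  ||A v|| <= c ||v|| for all v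
   (the spectral norm is the supremum of ||A v|| over unit vectors). *)
Definition opnorm_le d (A : mat d) (c : R) : Prop :=
  forall v : vec d, norm (matvec A v) <= c * norm v.

Definition msymmetric d (A : mat d) : Prop := forall i j, A i j = A j i.

Definition is_gradient d (F : vec d -> R) (G : vec d -> vec d) : Prop :=
  forall x : vec d, forall eps, 0 < eps -> exists delta, 0 < delta /\
    forall h : vec d, norm h < delta ->
      Rabs (F (vadd x h) - F x - dot (G x) h) <= eps * norm h.

Definition is_hessian d (G : vec d -> vec d) (Hs : vec d -> mat d) : Prop :=
  forall x : vec d, forall eps, 0 < eps -> exists delta, 0 < delta /\
    forall h : vec d, norm h < delta ->
      norm (vsub (vsub (G (vadd x h)) (G x)) (matvec (Hs x) h)) <= eps * norm h.

Definition cubic_model d (g : vec d) (H : mat d) (M : R) (s : vec d) : R :=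
  dot g s + / 2 * dot s (matvec H s) + M / 6 * norm s ^ 3.

(* Main.v *)
Require Import Defs.
From mathcomp Require Import all_boot.
From Stdlib Require Import Reals Lra Psatz FunctionalExtensionality.
From Coquelicot Require Coquelicot.
Open Scope R_scope.
Set Implicit Arguments. Unset Strict Implicit.

Definition sc d (c : R) (v : vec d) : vec d := fun i => c * v i.

Lemma sumD n (f g : 'I_n -> R) :
  \big[Rplus/0]_(i < n) (f i + g i) = \big[Rplus/0]_(i < n) f i + \big[Rplus/0]_(i < n) g i.
Proof.
elim/big_rec3: _ => [|i y1 y2 y3 _ ->]; lra.
Qed.

Lemma sumN n (f g : 'I_n -> R) :
  \big[Rplus/0]_(i < n) (f i - g i) = \big[Rplus/0]_(i < n) f i - \big[Rplus/0]_(i < n) g i.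
Proof.
elim/big_rec3: _ => [|i y1 y2 y3 _ ->]; lra.
Qed.

Lemma sumZ n (c : R) (f : 'I_n -> R) :
  \big[Rplus/0]_(i < n) (c * f i) = c * \big[Rplus/0]_(i < n) f i.
Proof.
elim/big_rec2: _ => [|i y1 y2 _ ->]; ring.
Qed.

Lemma sum_le n (f g : 'I_n -> R) : (forall i, f i <= g i) ->
  \big[Rplus/0]_(i < n) f i <= \big[Rplus/0]_(i < n) g i.
Proof.
move=> H; elim/big_rec2: _ => [|i y1 y2 _ Hy]; [lra|].
have := H i; lra.
Qed.

Lemma sum_ge0 n (f : 'I_n -> R) : (forall i, 0 <= f i) ->
  0 <= \big[Rplus/0]_(i < n) f i.
Proof.
move=> H; elim/big_rec: _ => [|i y _ Hy]; [lra|].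
have := H i; lra.
Qed.

Lemma dot_ge0 d (u : vec d) : 0 <= dot u u.
Proof. apply: sum_ge0 => i; nra. Qed.

Lemma dotC d (u v : vec d) : dot u v = dot v u.
Proof. rewrite /dot; apply: eq_bigr => i _; ring. Qed.

Lemma dot_subl d (u v w : vec d) : dot (vsub u v) w = dot u w - dot v w.
Proof. rewrite /dot -sumN; apply: eq_bigr => i _; rewrite /vsub; ring. Qed.

Lemma dot_scl d (c : R) (u w : vec d) : dot (sc c u) w = c * dot u w.
Proof. rewrite /dot -sumZ; apply: eq_bigr => i _; rewrite /sc; ring. Qed.

Lemma dot_scr d (c : R) (u w : vec d) : dot w (sc c u) = c * dot w u.
Proof. rewrite /dot -sumZ; apply: eq_bigr => i _; rewrite /sc; ring. Qed.

Lemma matvec_sc d (A : mat d) (c : R) (v : vec d) : matvec A (sc c v) = sc c (matvec A v).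
Proof.
apply: functional_extensionality => i; rewrite /matvec /sc -sumZ.
apply: eq_bigr => j _; ring.
Qed.

Lemma matvec_msub d (A B : mat d) (v : vec d) : matvec (msub A B) v = vsub (matvec A v) (matvec B v).
Proof.
apply: functional_extensionality => i; rewrite /matvec /vsub /msub -sumN.
apply: eq_bigr => j _; ring.
Qed.

Lemma norm_ge0 d (v : vec d) : 0 <= norm v.
Proof. apply: sqrt_pos. Qed.

Lemma norm_sq d (v : vec d) : norm v ^ 2 = dot v v.
Proof. rewrite /norm /= Rmult_1_r sqrt_sqrt //; apply: dot_ge0. Qed.

Lemma norm_sc d (c : R) (v : vec d) : norm (sc c v) = Rabs c * norm v.
Proof.
rewrite /norm dot_scl dot_scr -Rmult_assoc sqrt_mult; last by apply: dot_ge0.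
- by rewrite -sqrt_Rsqr_abs.
- nra.
Qed.

Lemma cs_aux (p A B : R) : 0 <= A -> 0 <= B ->
  (forall l, 0 < l -> 2 * p <= l * A + B / l) -> p <= sqrt A * sqrt B.
Proof.
move=> hA hB H.
have sA := sqrt_pos A; have sB := sqrt_pos B.
case: (Req_dec A 0) => [A0|An0].
  rewrite A0 sqrt_0 Rmult_0_l.
  apply: Rnot_lt_le => hp.
  have := H ((B + 1) / p) ltac:(apply: Rdiv_lt_0_compat; lra).
  rewrite A0 Rmult_0_r Rplus_0_l.
  have -> : B / ((B + 1) / p) = p * (B / (B + 1)) by field; lra.
  have : B / (B + 1) < 1.
    have -> : B / (B + 1) = 1 - / (B + 1) by field; lra.
    have := Rinv_0_lt_compat (B + 1) ltac:(lra); lra.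
  nra.
case: (Req_dec B 0) => [B0|Bn0].
  rewrite B0 sqrt_0 Rmult_0_r.
  apply: Rnot_lt_le => hp.
  have := H (p / (A + 1)) ltac:(apply: Rdiv_lt_0_compat; lra).
  rewrite B0 /Rdiv Rmult_0_l Rplus_0_r.
  have : A / (A + 1) < 1.
    have -> : A / (A + 1) = 1 - / (A + 1) by field; lra.
    have := Rinv_0_lt_compat (A + 1) ltac:(lra); lra.
  rewrite /Rdiv => h1.
  have : p * / (A + 1) * A = p * (A * / (A + 1)) by ring.
  nra.
have sAp : 0 < sqrt A by apply: sqrt_lt_R0; lra.
have sBp : 0 < sqrt B by apply: sqrt_lt_R0; lra.
have := H (sqrt B / sqrt A) ltac:(apply: Rdiv_lt_0_compat; lra).
have eA := sqrt_sqrt A hA; have eB := sqrt_sqrt B hB.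
have -> : sqrt B / sqrt A * A = sqrt A * sqrt B.
  rewrite -{2}eA; field; lra.
have -> : B / (sqrt B / sqrt A) = sqrt A * sqrt B.
  rewrite -{1}eB; field; lra.
lra.
Qed.

Lemma cs d (u v : vec d) : Rabs (dot u v) <= norm u * norm v.
Proof.
have key : forall s, s * s = 1 -> dot u v * s <= norm u * norm v.
  move=> s hs; apply: cs_aux; try apply: dot_ge0.
  move=> l hl.
  have -> : 2 * (dot u v * s) = \big[Rplus/0]_(i < d) (2 * s * (u i * v i)).
    by rewrite sumZ /dot; ring.
  rewrite /dot /Rdiv (Rmult_comm _ (/ l)) -!sumZ -sumD.
  apply: sum_le => i.
  have : 0 <= (l * s * u i - v i) ^ 2 * / l.
    apply: Rmult_le_pos; [apply: pow2_ge_0 | apply/Rlt_le/Rinv_0_lt_compat; lra].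
  have -> : (l * s * u i - v i) ^ 2 * / l = l * (s*s) * (u i * u i) - 2 * s * (u i * v i) + v i * v i * / l.
    field; lra.
  rewrite hs; lra.
have h1 := key 1 ltac:(ring). have h2 := key (-1) ltac:(ring).
apply: Rabs_le; lra.
Qed.

Module TT.
Import Coquelicot.Coquelicot.
Open Scope R_scope.

Lemma decr (f f' : R -> R) a b : a <= b ->
  (forall c, a <= c <= b -> derivable_pt_lim f c (f' c)) ->
  (forall c, a <= c <= b -> f' c <= 0) -> f b <= f a.
Proof.
intros hab hd hn.
destruct (Req_dec a b) as [e|ne]. { subst; lra. }
destruct (MVT_cor2 f f' a b ltac:(lra) hd) as [c [hc hc2]].
assert (f' c <= 0) by (apply hn; lra).
assert (f' c * (b - a) <= 0) by nra. lra.
Qed.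

Lemma taylor1d (p p1 p2 : R -> R) K :
 (forall t, derivable_pt_lim p t (p1 t)) -> (forall t, derivable_pt_lim p1 t (p2 t)) ->
 (forall t, 0 <= t -> p2 t - p2 0 <= K * t) ->
 p 1 - p 0 - p1 0 - p2 0 / 2 <= K / 6.
Proof.
intros d1 d2 hl.
set (q1 := fun t => p1 t - (p1 0 + t * p2 0 + K * (t*t) / 2)).
assert (hq1 : forall t, 0 <= t -> q1 t <= 0).
{ intros t ht.
  assert (q1 0 = 0) by (unfold q1; field).
  enough (q1 t <= q1 0) by lra.
  apply (@decr q1 (fun t => p2 t - (p2 0 + K * t))); [lra| |].
  - intros c _. apply is_derive_Reals. unfold q1.
    apply (is_derive_minus p1 (fun t => p1 0 + t * p2 0 + K * (t*t) / 2)).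
    + apply is_derive_Reals, d2.
    + auto_derive; auto. field.
  - intros c hc. specialize (hl c ltac:(lra)). lra. }
set (q0 := fun t => p t - (p 0 + t * p1 0 + t * t / 2 * p2 0 + K * (t*t*t) / 6)).
assert (q0 0 = 0) by (unfold q0; field).
enough (q0 1 <= q0 0) by (unfold q0 in *; lra).
apply (@decr q0 q1); [lra| |].
- intros c _. apply is_derive_Reals. unfold q0, q1.
  apply (is_derive_minus p (fun t => p 0 + t * p1 0 + t * t / 2 * p2 0 + K * (t*t*t) / 6)).
  + apply is_derive_Reals, d1.
  + auto_derive; auto. field.
- intros c hc. apply hq1; lra.
Qed.
End TT.

Import TT.

Lemma fin (A B l h C eps : R) : h <> 0 -> 0 <= C -> 0 < eps ->
  Rabs (A - B - h * l) <= eps / (2 * (C + 1)) * (Rabs h * C) ->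
  Rabs ((A - B) / h - l) < eps.
Proof.
move=> hh hC he H.
have ha : 0 < Rabs h by apply: Rabs_pos_lt.
have -> : (A - B) / h - l = (A - B - h * l) / h by field.
rewrite /Rdiv Rabs_mult Rabs_inv.
set X := Rabs (A - B - h * l) in H *.
have e1 : eps / (2 * (C + 1)) * (Rabs h * C) = eps * Rabs h * (C / (2 * (C + 1))) by field; lra.
have e2 : C / (2 * (C + 1)) < 1.
  have -> : C / (2 * (C + 1)) = 1/2 - / (2 * (C + 1)) by field; lra.
  have := Rinv_0_lt_compat (2 * (C + 1)) ltac:(lra); lra.
have e3 : 0 <= C / (2 * (C + 1)) by apply: Rmult_le_pos; [lra | apply/Rlt_le/Rinv_0_lt_compat; lra].
rewrite e1 in H.
have hp : 0 < eps * Rabs h by nra.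
have hX : X < eps * Rabs h by nra.
have -> : eps = eps * Rabs h * / Rabs h by field; lra.
rewrite /Rdiv; apply: Rmult_lt_compat_r => //; by apply: Rinv_0_lt_compat.
Qed.

Lemma vshift d (x s : vec d) t h : vadd (vadd x (sc t s)) (sc h s) = vadd x (sc (t + h) s).
Proof. apply: functional_extensionality => i; rewrite /vadd /sc; ring. Qed.

Lemma vsc0 d (x s : vec d) : vadd x (sc 0 s) = x.
Proof. apply: functional_extensionality => i; rewrite /vadd /sc; ring. Qed.

Lemma vsc1 d (x s : vec d) : vadd x (sc 1 s) = vadd x s.
Proof. apply: functional_extensionality => i; rewrite /vadd /sc; ring. Qed.

Lemma vsubsc d (x s : vec d) t : vsub (vadd x (sc t s)) x = sc t s.
Proof. apply: functional_extensionality => i; rewrite /vadd /vsub /sc; ring. Qed.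

Lemma small_h (h r del : R) : 0 <= r -> 0 < del -> Rabs h < del / (r + 1) -> Rabs h * r < del.
Proof.
move=> hr hd hh.
have h0 := Rabs_pos h.
have : Rabs h * (r + 1) < del.
  have -> : del = del / (r + 1) * (r + 1) by field; lra.
  apply: Rmult_lt_compat_r; lra.
nra.
Qed.

Lemma d1 d (F : vec d -> R) G (x s : vec d) t : is_gradient F G ->
  derivable_pt_lim (fun t => F (vadd x (sc t s))) t (dot (G (vadd x (sc t s))) s).
Proof.
move=> hg eps he.
set y := vadd x (sc t s); set r := norm s.
have hr : 0 <= r := norm_ge0 s.
have he' : 0 < eps / (2 * (r + 1)) by apply: Rdiv_lt_0_compat; lra.
have [del [hdel H]] := hg y _ he'.
have hdp : 0 < del / (r + 1) by apply: Rdiv_lt_0_compat; lra.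
exists (mkposreal _ hdp) => h hh0 hh /=.
rewrite -vshift.
have := H (sc h s); rewrite norm_sc dot_scr => H'.
apply: (fin (C:=r)) => //.
rewrite -/y; apply: H'; apply: small_h => //.
Qed.

Lemma d2 d (G : vec d -> vec d) Hs (x s : vec d) t : is_hessian G Hs ->
  derivable_pt_lim (fun t => dot (G (vadd x (sc t s))) s) t
    (dot (matvec (Hs (vadd x (sc t s))) s) s).
Proof.
move=> hg eps he.
set y := vadd x (sc t s); set r := norm s.
have hr : 0 <= r := norm_ge0 s.
have hrr : 0 <= r * r by nra.
have he' : 0 < eps / (2 * (r * r + 1)) by apply: Rdiv_lt_0_compat; lra.
have [del [hdel H]] := hg y _ he'.
have hdp : 0 < del / (r + 1) by apply: Rdiv_lt_0_compat; lra.
exists (mkposreal _ hdp) => h hh0 hh /=.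
rewrite -vshift.
have := H (sc h s); rewrite norm_sc => H'.
have H2 := H' (small_h hr hdel hh).
rewrite matvec_sc in H2.
apply: (fin (C:=r * r)) => //.
rewrite -/y.
have := cs (vsub (vsub (G (vadd y (sc h s))) (G y)) (sc h (matvec (Hs y) s))) s.
rewrite !dot_subl dot_scl -/r => hc.
have : norm (vsub (vsub (G (vadd y (sc h s))) (G y)) (sc h (matvec (Hs y) s))) * r <=
   eps / (2 * (r * r + 1)) * (Rabs h * r) * r by apply: Rmult_le_compat_r.
have -> : eps / (2 * (r * r + 1)) * (Rabs h * r) * r = eps / (2 * (r * r + 1)) * (Rabs h * (r * r)) by ring.
lra.
Qed.

Lemma taylor d (F : vec d -> R) G Hs L2 (x s : vec d) :
  is_gradient F G -> is_hessian G Hs ->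
  (forall x y : vec d, opnorm_le (msub (Hs x) (Hs y)) (L2 * norm (vsub x y))) ->
  F (vadd x s) - F x - dot (G x) s - dot (matvec (Hs x) s) s / 2 <= L2 * norm s ^ 3 / 6.
Proof.
move=> hg hh hl.
have := @taylor1d (fun t => F (vadd x (sc t s))) (fun t => dot (G (vadd x (sc t s))) s)
   (fun t => dot (matvec (Hs (vadd x (sc t s))) s) s) (L2 * norm s ^ 3)
   (fun t => d1 x s t hg) (fun t => d2 x s t hh).
rewrite !vsc0 vsc1.
have hr := norm_ge0 s.
apply => t ht /=.
rewrite -dot_subl -matvec_msub.
have h2 := cs (matvec (msub (Hs (vadd x (sc t s))) (Hs x)) s) s.
have := hl (vadd x (sc t s)) x s.
rewrite vsubsc norm_sc Rabs_pos_eq // => h1.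
have h3 : norm (matvec (msub (Hs (vadd x (sc t s))) (Hs x)) s) * norm s <=
   L2 * (t * norm s) * norm s * norm s by apply: Rmult_le_compat_r.
have h4 := Rle_abs (dot (matvec (msub (Hs (vadd x (sc t s))) (Hs x)) s) s).
have -> : L2 * (norm s * (norm s * (norm s * 1))) * t = L2 * (t * norm s) * norm s * norm s by ring.
lra.
Qed.

Lemma model1d (a b c : R) : 0 <= c -> a + b / 2 + c <= - a + b / 2 + c ->
  (forall t, 0 < t < 1 -> a + b / 2 + c <= a * t + b * (t * t) / 2 + c * (t * t * t)) ->
  a + b / 2 + c <= - c / 2.
Proof.
move=> hc h1 h2.
suff : a + b + 3 * c <= 0 by lra.
apply: Rnot_lt_le => hd.
set D := a + b + 3 * c in hd.
set K := Rabs b / 2 + 3 * c + 1.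
have hK : 1 <= K by have := Rabs_pos b; rewrite /K; lra.
set eta := D / (K + D).
have he : 0 < eta by apply: Rdiv_lt_0_compat; lra.
have he1 : eta < 1.
  have -> : eta = 1 - K / (K + D) by rewrite /eta; field; lra.
  have : 0 < K / (K + D) by apply: Rdiv_lt_0_compat; lra.
  lra.
have hKe : eta * K < D.
  have -> : eta * K = D * (K / (K + D)) by rewrite /eta; field; lra.
  have : K / (K + D) < 1.
    have -> : K / (K + D) = 1 - D / (K + D) by field; lra.
    have : 0 < D / (K + D) by apply: Rdiv_lt_0_compat; lra.
    lra.
  nra.
have := h2 (1 - eta) ltac:(lra).
set E := D - b * eta / 2 - 3 * c * eta + c * (eta * eta).
have hE : 0 < E.
  have hb := Rle_abs b. have hb2 := Rle_abs (- b). rewrite Rabs_Ropp in hb2.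
  have : b * eta / 2 <= Rabs b / 2 * eta by nra.
  have : 0 <= c * (eta * eta) by nra.
  rewrite /K in hKe. rewrite /E. nra.
have heq : a * (1 - eta) + b * ((1 - eta) * (1 - eta)) / 2 + c * ((1 - eta) * (1 - eta) * (1 - eta))
  - (a + b / 2 + c) = - eta * E .
  rewrite /E /D. field.
nra.
Qed.

Lemma model_bound d (g : vec d) (H : mat d) (M : R) (s : vec d) : 0 < M ->
  (forall s' : vec d, cubic_model g H M s <= cubic_model g H M s') ->
  cubic_model g H M s <= - (M / 6 * norm s ^ 3) / 2.
Proof.
move=> hM hmin.
have hr := norm_ge0 s.
have sc_model : forall t, cubic_model g H M (sc t s) =
   dot g s * t + dot s (matvec H s) * (t * t) / 2 + M / 6 * (Rabs t * norm s) ^ 3.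
  move=> t; rewrite /cubic_model dot_scr matvec_sc dot_scl dot_scr norm_sc; field.
have e : cubic_model g H M s = dot g s + dot s (matvec H s) / 2 + M / 6 * norm s ^ 3.
  rewrite /cubic_model; field.
rewrite e; apply: model1d.
- have : 0 <= norm s ^ 3 by apply: pow_le.
  have : 0 < M / 6 by lra.
  nra.
- have := hmin (sc (-1) s); rewrite sc_model e Rabs_Ropp Rabs_R1.
  have -> : (1 * norm s) ^ 3 = norm s ^ 3 by ring.
  lra.
- move=> t ht; have := hmin (sc t s); rewrite sc_model e Rabs_pos_eq; last lra.
  have -> : (t * norm s) ^ 3 = t * t * t * norm s ^ 3 by ring.
  lra.
Qed.

Lemma young1 (a e r : R) : 0 <= a -> 0 <= e -> 0 <= r ->
  Rmax (a ^ 2) (e ^ 2) * r <= 2 * r ^ 3 + a ^ 3 + e ^ 3.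
Proof.
move=> ha he hr.
have k : forall m, 0 <= m -> m ^ 2 * r <= r ^ 3 + m ^ 3.
  move=> m hm. have : 0 <= (m - r) ^ 2 * (m + r) by apply: Rmult_le_pos; [apply: pow2_ge_0|lra].
  move=> h. have : 0 <= r ^ 3 by apply: pow_le. have : 0 <= m ^ 3 by apply: pow_le. nra.
have a3 : 0 <= a ^ 3 by apply: pow_le. have e3 : 0 <= e ^ 3 by apply: pow_le.
have r3 : 0 <= r ^ 3 by apply: pow_le.
rewrite /Rmax; case: Rle_dec => _.
- have := k a ha; have := k e he; lra.
- have := k a ha; have := k e he; lra.
Qed.

Lemma young2 (a e r : R) : 0 <= a -> 0 <= e -> 0 <= r ->
  Rmax a e * r * r / 2 <= r ^ 3 + (a ^ 3 + e ^ 3) / 2.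
Proof.
move=> ha he hr.
have k : forall m, 0 <= m -> m * r * r <= 2 * r ^ 3 + m ^ 3.
  move=> m hm. have : 0 <= (m - r) ^ 2 * (m + 2 * r) by apply: Rmult_le_pos; [apply: pow2_ge_0|lra].
  move=> h. nra.
have a3 : 0 <= a ^ 3 by apply: pow_le. have e3 : 0 <= e ^ 3 by apply: pow_le.
rewrite /Rmax; case: Rle_dec => _.
- have := k a ha; have := k e he; lra.
- have := k a ha; have := k e he; lra.
Qed.

Theorem mainTheorem2 (d : nat) (F : vec d -> R) (gradF : vec d -> vec d)
  (hessF : vec d -> mat d) (L2 : R)
  (hgrad : is_gradient F gradF) (hhess : is_hessian gradF hessF)
  (hlip : forall x y : vec d, opnorm_le (msub (hessF x) (hessF y)) (L2 * norm (vsub x y)))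
  (xk sk : vec d) (eps1 M alpha beta : R)
  (heps : 0 < eps1) (hM : 0 < M) (halpha : 0 <= alpha) (hbeta : 0 <= beta)
  (gk : vec d) (Hk : mat d) (hsym : msymmetric Hk)
  (hH : opnorm_le (msub Hk (hessF xk)) (alpha * Rmax (norm sk) eps1))
  (hg : norm (vsub gk (gradF xk)) <= beta * Rmax (norm sk ^ 2) (eps1 ^ 2))
  (sk1 : vec d)
  (hmin : forall s : vec d, cubic_model gk Hk M sk1 <= cubic_model gk Hk M s) :
  F (vadd xk sk1) - F xk <=
    - ((3 * M - 2 * L2) / 12 - 2 * beta - alpha) * norm sk1 ^ 3
    + (beta + alpha / 2) * norm sk ^ 3 + (beta + alpha / 2) * eps1 ^ 3.
Proof.
have T := @taylor _ F gradF hessF L2 xk sk1 hgrad hhess hlip.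
have Md := model_bound hM hmin.
rewrite /cubic_model in Md.
set r := norm sk1 in T Md *.
have hr : 0 <= r := norm_ge0 sk1.
have ha := norm_ge0 sk.
have E1 : dot (gradF xk) sk1 - dot gk sk1 <= beta * Rmax (norm sk ^ 2) (eps1 ^ 2) * r.
  have := cs (vsub gk (gradF xk)) sk1; rewrite dot_subl -/r => h.
  have := Rle_abs (- (dot gk sk1 - dot (gradF xk) sk1)); rewrite Rabs_Ropp => h'.
  have : norm (vsub gk (gradF xk)) * r <= beta * Rmax (norm sk ^ 2) (eps1 ^ 2) * r
    by apply: Rmult_le_compat_r.
  lra.
have E2 : dot (matvec (hessF xk) sk1) sk1 - dot sk1 (matvec Hk sk1) <=
    alpha * Rmax (norm sk) eps1 * r * r.
  have := cs (matvec (msub Hk (hessF xk)) sk1) sk1.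
  rewrite matvec_msub dot_subl -/r (dotC (matvec Hk sk1)) => h.
  have := Rle_abs (- (dot sk1 (matvec Hk sk1) - dot (matvec (hessF xk) sk1) sk1)).
  rewrite Rabs_Ropp => h'.
  have := hH sk1; rewrite -/r matvec_msub => h3.
  have : norm (vsub (matvec Hk sk1) (matvec (hessF xk) sk1)) * r <=
    alpha * Rmax (norm sk) eps1 * r * r by apply: Rmult_le_compat_r.
  lra.
have Y1 := young1 ha (Rlt_le _ _ heps) hr.
have Y2 := young2 ha (Rlt_le _ _ heps) hr.
have Y1' : beta * (Rmax (norm sk ^ 2) (eps1 ^ 2) * r) <= beta * (2 * r ^ 3 + norm sk ^ 3 + eps1 ^ 3)
  by apply: Rmult_le_compat_l.
have Y2' : alpha * (Rmax (norm sk) eps1 * r * r / 2) <= alpha * (r ^ 3 + (norm sk ^ 3 + eps1 ^ 3) / 2)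
  by apply: Rmult_le_compat_l.
lra.
Qed.
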